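(* Let $X$ be a set and let $\mathcal{L}$ be a nest on $X$ that $T_0$-separates $X$. Then $M\in\mathcal{L}$ is a lower set if and only if $M$ has no maximal element.
   Context: A nest on $X$ is a family of subsets of $X$ totally ordered by inclusion; it $T_0$-separates $X$ if for all distinct $x,y\in X$ some member contains exactly one of $x,y$. Define $x\triangleleft_{\mathcal{L}} y$ iff there exists $L\in\mathcal{L}$ with $x\in L$ and $y\notin L$. For $A\subseteq X$, ${\downarrow}A=\{x\in X : \exists y\in A,\ x\triangleleft_{\mathcal{L}} y\}$, and $A$ is a lower set if $A={\downarrow}A$. A maximal element of $M$ is some $m\in M$ for which there is no $y\in M$ with $m\triangleleft_{\mathcal{L}} y$. *)

(* Defs.v *)
From mathcomp Require Import all_boot.
From mathcomp Require Import boolp classical_sets.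
Set Implicit Arguments. Unset Strict Implicit. Unset Printing Implicit Defensive.
Local Open Scope classical_set_scope.

Definition nest (X : Type) (L : set (set X)) : Prop :=
  forall A B, L A -> L B -> A `<=` B \/ B `<=` A.

Definition T0_separates (X : Type) (L : set (set X)) : Prop :=
  forall x y : X, x <> y ->
    exists2 A, L A & ((A x /\ ~ A y) \/ (A y /\ ~ A x)).

Definition nest_rel (X : Type) (L : set (set X)) (x y : X) : Prop :=
  exists2 A, L A & (A x /\ ~ A y).

Definition down (X : Type) (L : set (set X)) (A : set X) : set X :=
  [set x | exists2 y, A y & nest_rel L x y].

Definition lower_set (X : Type) (L : set (set X)) (A : set X) : Prop :=
  A = down L A.

Definition maximal_elt (X : Type) (L : set (set X)) (M : set X) (m : X) : Prop :=
  M m /\ ~ (exists2 y, M y & nest_rel L m y).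

(* Main.v *)
Require Import Defs.
From mathcomp Require Import all_boot.
From mathcomp Require Import boolp classical_sets.

Theorem proposition3p12 (X : Type) (L : set (set X))
  (hnest : nest L) (hT0 : T0_separates L) (M : set X) (hM : L M) :
  lower_set L M <-> ~ (exists m, maximal_elt L M m).
Proof.
split.
- move=> hlow [m [Mm Hn]]; apply: Hn.
  have : Defs.down L M m by rewrite -hlow.
  by [].
- move=> Hno; rewrite /lower_set; apply: funext => x; apply: propext; split.
  + move=> Mx; apply: contrapT => Hd; apply: Hno; exists x; split => //.
  + case=> y My [A LA [Ax nAy]].
    case: (hnest A M LA hM) => H; first exact: H.
    by exfalso; apply: nAy; apply: H.
Qed.
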